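(* Let $X$ be an eventually dendric shift space. For every $k\ge1$ there exists $n\ge1$ such that $\mathcal E_k(w)$ is a simple tree for every $w\in\mathcal L_{\ge n}(X)$.
   Context: $A$ is a finite alphabet; a shift space is a closed shift-invariant subset $X\subseteq A^{\mathbb Z}$; $\mathcal L(X)$ is its set of finite factors, $\mathcal L_n(X)=\mathcal L(X)\cap A^n$, $\mathcal L_{\ge n}(X)=\bigcup_{j\ge n}\mathcal L_j(X)$. For $w\in\mathcal L(X)$ and $k\ge1$: $L_k(w)=\{u\in\mathcal L_k(X):uw\in\mathcal L(X)\}$, $R_k(w)=\{v\in\mathcal L_k(X):wv\in\mathcal L(X)\}$, and the extension graph $\mathcal E_k(w)$ is the undirected bipartite graph with vertex set the disjoint union of $L_k(w)$ and $R_k(w)$ and an edge $(u,v)$ iff $uwv\in\mathcal L(X)$. $X$ is eventually dendric if for some $m\ge0$, $\mathcal E_1(w)$ is a tree for every $w\in\mathcal L_{\ge m}(X)$. A tree is simple if its diameter (maximal length of a simple path) is at most $3$. *)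

(* Defs.v *)
From mathcomp Require Import all_boot all_order all_algebra.
Set Implicit Arguments. Unset Strict Implicit. Unset Printing Implicit Defensive.
Import GRing.Theory Num.Theory.

Definition config (A : finType) := int -> A.

Definition shift (A : finType) (x : config A) : config A :=
  fun i => x (i + 1)%R.

(* closed in the product topology: x is in X whenever every finite central
   window [-n, n] of x agrees with some point of X *)
Definition closed_set (A : finType) (X : config A -> Prop) : Prop :=
  forall x : config A,
    (forall n : nat, exists y, X y /\
        forall i : int, (- (n%:Z) <= i <= n%:Z)%R -> y i = x i) ->
    X x.

Definition shift_invariant (A : finType) (X : config A -> Prop) : Prop :=
  forall x : config A, X x <-> X (shift x).

Definition shift_space (A : finType) (X : config A -> Prop) : Prop :=
  closed_set X /\ shift_invariant X.

Definition factor_at (A : finType) (x : config A) (i : int) (n : nat) : seq A :=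
  [seq x (i + j%:Z)%R | j <- iota 0 n].

Definition inL (A : finType) (X : config A -> Prop) (w : seq A) : Prop :=
  exists x i, X x /\ w = factor_at x i (size w).

Section Graphs.
Variable T : eqType.
Variable V : T -> Prop.
Variable E : T -> T -> Prop.

Fixpoint epath (x : T) (p : seq T) : Prop :=
  match p with
  | [::] => True
  | y :: p' => E x y /\ epath y p'
  end.

Definition all_V (p : seq T) : Prop := forall v, v \in p -> V v.

Definition connected : Prop :=
  forall a b, V a -> V b ->
    exists p, all_V (a :: p) /\ epath a p /\ last a p = b.

Definition acyclic : Prop :=
  ~ exists x p, [/\ all_V (x :: p), uniq (x :: p), 2 <= size p,
                   epath x p & E (last x p) x].

Definition is_tree : Prop := connected /\ acyclic.

(* simple path x :: p has length (number of edges) size p *)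
Definition simple_path (x : T) (p : seq T) : Prop :=
  [/\ all_V (x :: p), uniq (x :: p) & epath x p].

(* diameter (maximal length of a simple path) at most 3 *)
Definition diam_le3 : Prop :=
  forall x p, simple_path x p -> size p <= 3.

Definition simple_tree : Prop := is_tree /\ diam_le3.
End Graphs.

(* vertices: inl u for u in L_k(w), inr v for v in R_k(w) (disjoint union) *)
Definition ext_vertex (A : finType) (X : config A -> Prop) (k : nat) (w : seq A)
    (a : seq A + seq A) : Prop :=
  match a with
  | inl u => size u = k /\ inL X (u ++ w)
  | inr v => size v = k /\ inL X (w ++ v)
  end.

Definition ext_edge (A : finType) (X : config A -> Prop) (w : seq A)
    (a b : seq A + seq A) : Prop :=
  match a, b with
  | inl u, inr v => inL X (u ++ w ++ v)
  | inr v, inl u => inL X (u ++ w ++ v)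
  | _, _ => False
  end.

Definition eventually_dendric (A : finType) (X : config A -> Prop) : Prop :=
  exists m : nat, forall w, inL X w -> m <= size w ->
    is_tree (ext_vertex X 1 w) (ext_edge X w).

(* Main.v *)
Require Import Defs.
From Stdlib Require Import Classical ClassicalEpsilon.
From mathcomp Require Import all_boot all_order all_algebra zify.
Set Implicit Arguments. Unset Strict Implicit. Unset Printing Implicit Defensive.

Definition DS (P Q : Type) (VP : P -> Prop) (VQ : Q -> Prop) (e : P -> Q -> Prop) :=
  exists p0 q0, VP p0 /\ VQ q0 /\
    forall p q, VP p -> VQ q -> (e p q <-> p = p0 \/ q = q0).

Lemma DS_flip P Q (VP : P -> Prop) (VQ : Q -> Prop) (e : P -> Q -> Prop) :
  DS VP VQ e -> DS VQ VP (fun q p => e p q).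
Proof.
move=> [p0 [q0 [h1 [h2 h]]]]; exists q0, p0; split=> //; split=> // q p hq hp.
have := h p q hp hq; tauto.
Qed.

Lemma DS_ext P Q (VP VP' : P -> Prop) (VQ VQ' : Q -> Prop) (e e' : P -> Q -> Prop) :
  (forall p, VP p <-> VP' p) -> (forall q, VQ q <-> VQ' q) ->
  (forall p q, VP p -> VQ q -> (e p q <-> e' p q)) -> DS VP VQ e -> DS VP' VQ' e'.
Proof.
move=> hP hQ hE [p0 [q0 [h1 [h2 h]]]]; exists p0, q0.
split; first by apply/hP. split; first by apply/hQ.
move=> p q /hP hp /hQ hq. have := hE p q hp hq. have := h p q hp hq. tauto.
Qed.

Lemma DS_transport P Q Q2 (VP : P -> Prop) (VQ : Q -> Prop) (VQ2 : Q2 -> Prop)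
  (e : P -> Q -> Prop) (e2 : P -> Q2 -> Prop) (psi : Q -> Q2) :
  (forall q, VQ q -> VQ2 (psi q)) ->
  (forall q2, VQ2 q2 -> exists q, VQ q /\ psi q = q2) ->
  (forall q q', VQ q -> VQ q' -> psi q = psi q' -> q = q') ->
  (forall p q, VP p -> VQ q -> (e p q <-> e2 p (psi q))) ->
  DS VP VQ e -> DS VP VQ2 e2.
Proof.
move=> h1 h2 h3 h4 [p0 [q0 [hp0 [hq0 h]]]]; exists p0, (psi q0).
split=> //; split; first exact: h1.
move=> p q2 hp /h2 [q [hq <-]].
have := h4 p q hp hq; have := h p q hp hq.
have : q = q0 <-> psi q = psi q0.
  by split=> [->//|E]; apply: h3.
tauto.
Qed.

Lemma pair_eqP (X Y : Type) (a a' : X) (b b' : Y) : (a, b) = (a', b') <-> a = a' /\ b = b'.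
Proof. by split=> [[-> ->]|[-> ->]]. Qed.

Lemma DS_comp P Q C (VP : P -> Prop) (VQ : Q -> Prop) (e : P -> Q -> Prop)
  (VC : Q -> C -> Prop) (f : Q -> P -> C -> Prop) :
  DS VP VQ e ->
  (forall q, VQ q -> DS (fun p => VP p /\ e p q) (VC q) (f q)) ->
  (forall q1 c1 q2 c2, VQ q1 -> VC q1 c1 -> VQ q2 -> VC q2 c2 -> q1 <> q2 ->
     exists p, VP p /\ e p q1 /\ f q1 p c1 /\ e p q2 /\ f q2 p c2) ->
  DS VP (fun qc : Q * C => VQ qc.1 /\ VC qc.1 qc.2)
        (fun p qc => e p qc.1 /\ f qc.1 p qc.2).
Proof.
move=> [p0 [q0 [hp0 [hq0 h]]]] hD hPS.
have [p1 [c1 [[hp1 hep1] [hc1 h1]]]] := hD q0 hq0.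
have K : forall q, VQ q -> q <> q0 -> forall p c, VP p -> VC q c ->
    (e p q /\ f q p c <-> p = p0).
  move=> q hq nq p c hp hc.
  have [pq [cq [[hpq hepq] [hcq hq']]]] := hD q hq.
  have epq : pq = p0 by have := h pq q hpq hq; tauto.
  have ep0 : e p0 q by have := h p0 q hp0 hq; tauto.
  have := hq' p0 c (conj hp0 ep0) hc.
  have := h p q hp hq.
  move=> H1 H2; split; first tauto.
  move=> ->; split=> //; apply/H2; left; by rewrite epq.
have eq0 : forall p, VP p -> e p q0 by move=> p hp; have := h p q0 hp hq0; tauto.
have Hq0 : forall p c, VP p -> VC q0 c -> (e p q0 /\ f q0 p c <-> p = p1 \/ c = c1).
  move=> p c hp hc; have := h1 p c (conj hp (eq0 p hp)) hc; have := eq0 p hp; tauto.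
have fin : forall pc, pc = p0 \/ (forall q, VQ q -> q = q0) -> pc = p1 \/ (forall c, VC q0 c -> c = c1) ->
   VP pc -> DS VP (fun qc : Q * C => VQ qc.1 /\ VC qc.1 qc.2)
        (fun p qc => e p qc.1 /\ f qc.1 p qc.2).
  move=> pc H1 H2 hpc; exists pc, (q0, c1); split=> //; split=> //.
  move=> p [q c] hp [/= hq hc].
  rewrite pair_eqP.
  case: (classic (q = q0)) => [Eq|nq].
    subst q. have := Hq0 p c hp hc. case: H2 => [E|H2].
      subst pc. tauto.
    have := H2 c hc; case: H1 => [E|H1]; [subst pc|]; tauto.
  have := K q hq nq p c hp hc.
  case: H1 => [E|H1]; first by subst pc; tauto.
  by have := H1 q hq.
case: (classic (p1 = p0)) => [E|np].
  by apply: (fin p0); [left|left|].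
case: (classic (forall q, VQ q -> q = q0)) => [Hall|nall].
  by apply: (fin p1); [right|left|].
case: (classic (forall c, VC q0 c -> c = c1)) => [Hc|nc].
  by apply: (fin p0); [left|right|].
exfalso.
have [q [hq nq]] : exists q, VQ q /\ q <> q0.
  apply: NNPP => H; apply: nall => q hq; apply: NNPP => nq; apply: H; by exists q.
have [c'' [hc'' nc'']] : exists c, VC q0 c /\ c <> c1.
  apply: NNPP => H; apply: nc => c hc; apply: NNPP => nq'; apply: H; by exists c.
have [pq [cq [[hpq _] [hcq _]]]] := hD q hq.
have [p [hp [e1 [f1 [e2 f2]]]]] := hPS q0 c'' q cq hq0 hc'' hq hcq (fun E => nq (esym E)).
have Ep : p = p0 by have := K q hq nq p cq hp hcq; tauto.
subst p.
have := Hq0 p0 c'' hp0 hc''. have := eq0 p0 hp0.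
move=> H3 H4. have := (proj1 H4) (conj H3 f1). case=> E; [apply: np; by rewrite E|by apply: nc''].
Qed.
Definition C4 P Q (VP : P -> Prop) (VQ : Q -> Prop) (e : P -> Q -> Prop) :=
  forall p p' q q', VP p -> VP p' -> VQ q -> VQ q' -> p <> p' -> q <> q' ->
    e p q -> e p q' -> e p' q -> e p' q' -> False.

Definition C6 P Q (VP : P -> Prop) (VQ : Q -> Prop) (e : P -> Q -> Prop) :=
  forall p1 p2 p3 q1 q2 q3, VP p1 -> VP p2 -> VP p3 -> VQ q1 -> VQ q2 -> VQ q3 ->
  p1 <> p2 -> p2 <> p3 -> p1 <> p3 -> q1 <> q2 -> q2 <> q3 -> q1 <> q3 ->
  e p1 q1 -> e p2 q1 -> e p2 q2 -> e p3 q2 -> e p3 q3 -> e p1 q3 -> False.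

Definition SLp P Q (VP : P -> Prop) (VQ : Q -> Prop) (e : P -> Q -> Prop) :=
  forall p p', VP p -> VP p' -> p <> p' -> exists q, VQ q /\ e p q /\ e p' q.

Lemma C4_flip P Q (VP : P -> Prop) (VQ : Q -> Prop) (e : P -> Q -> Prop) :
  C4 VP VQ e -> C4 VQ VP (fun q p => e p q).
Proof.
move=> h q q' p p' hq hq' hp hp' nq np e1 e2 e3 e4.
exact: (h p p' q q' hp hp' hq hq' np nq e1 e3 e2 e4).
Qed.

Lemma C6_flip P Q (VP : P -> Prop) (VQ : Q -> Prop) (e : P -> Q -> Prop) :
  C6 VP VQ e -> C6 VQ VP (fun q p => e p q).
Proof.
move=> h q1 q2 q3 p1 p2 p3 hq1 hq2 hq3 hp1 hp2 hp3 n1 n2 n3 m1 m2 m3 e1 e2 e3 e4 e5 e6.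
apply: (h p1 p2 p3 q2 q3 q1) => //; try (by move=> E; subst); by [].
Qed.

Lemma star_all P Q (VP : P -> Prop) (VQ : Q -> Prop) (e : P -> Q -> Prop) :
  C4 VP VQ e -> C6 VP VQ e -> SLp VP VQ e ->
  forall q x s, VQ q -> VP x -> VP s -> x <> s -> e x q -> e s q ->
  forall y, VP y -> e y q.
Proof.
move=> h4 h6 hS q x s hq hx hs nxs exq esq y hy.
apply: NNPP => ny.
have nxy : x <> y by move=> E; subst.
have nsy : s <> y by move=> E; subst.
have [c [hc [exc eyc]]] := hS x y hx hy nxy.
have [c2 [hc2 [esc2 eyc2]]] := hS s y hs hy nsy.
have ncq : q <> c by move=> E; subst.
have nc2q : q <> c2 by move=> E; subst.
have ncc2 : c2 <> c.
  move=> E; subst c2. exact: (h4 x s q c hx hs hq hc nxs ncq exq exc esq esc2).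
exact: (h6 x s y q c2 c hx hs hy hq hc2 hc nxs nsy nxy nc2q ncc2 ncq exq esq esc2 eyc2 eyc exc).
Qed.

Lemma DS_single P Q (VP : P -> Prop) (VQ : Q -> Prop) (e : P -> Q -> Prop) :
  (forall p, VP p -> exists q, VQ q /\ e p q) ->
  (forall q, VQ q -> exists p, VP p /\ e p q) ->
  (exists p, VP p) -> (forall p p', VP p -> VP p' -> p = p') -> DS VP VQ e.
Proof.
move=> hnP hnQ [ps hps] hsing.
have [qs [hqs _]] := hnP ps hps.
exists ps, qs; split=> //; split=> // p q hp hq.
have Ep := hsing p ps hp hps; subst p.
split=> [_|_]; first by left.
have [p' [hp' ep']] := hnQ q hq. by rewrite -(hsing p' ps hp' hps).
Qed.

Lemma DS_local P Q (VP : P -> Prop) (VQ : Q -> Prop) (e : P -> Q -> Prop) :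
  (forall p, VP p -> exists q, VQ q /\ e p q) ->
  (forall q, VQ q -> exists p, VP p /\ e p q) ->
  (exists p, VP p) ->
  SLp VP VQ e -> SLp VQ VP (fun q p => e p q) ->
  C4 VP VQ e -> C6 VP VQ e -> DS VP VQ e.
Proof.
move=> hnP hnQ [p hp] hSL hSR h4 h6.
case: (classic (forall p p', VP p -> VP p' -> p = p')) => [Hs|nP].
  by apply: DS_single => //; exists p.
case: (classic (forall q q', VQ q -> VQ q' -> q = q')) => [Hs|nQ].
  apply: (@DS_flip Q P VQ VP (fun q p => e p q)); apply: DS_single => //.
    have [q [hq _]] := hnP p hp; by exists q.
have [p1 [p2 [hp1 [hp2 np]]]] : exists p1 p2, VP p1 /\ VP p2 /\ p1 <> p2.
  apply: NNPP => H; apply: nP => a b ha hb; apply: NNPP => nab; apply: H.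
  by exists a, b.
have [q1 [q2 [hq1 [hq2 nq]]]] : exists q1 q2, VQ q1 /\ VQ q2 /\ q1 <> q2.
  apply: NNPP => H; apply: nQ => a b ha hb; apply: NNPP => nab; apply: H.
  by exists a, b.
have [b0 [hb0 [e1 e2]]] := hSL p1 p2 hp1 hp2 np.
have allb := star_all h4 h6 hSL hb0 hp1 hp2 np e1 e2.
have [a0 [ha0 [e3 e4]]] := hSR q1 q2 hq1 hq2 nq.
have alla := star_all (C4_flip h4) (C6_flip h6) hSR ha0 hq1 hq2 nq e3 e4.
exists a0, b0; split=> //; split=> // x y hx hy; split.
  move=> exy; apply: NNPP => H.
  apply: (h4 x a0 y b0 hx ha0 hy hb0) => //.
  - by move=> E; apply: H; left.
  - by move=> E; apply: H; right.
  - exact: allb.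
  - exact: alla.
  - exact: alla.
by case=> ->; [apply: alla|apply: allb].
Qed.

Definition dec (P : Prop) : bool := if excluded_middle_informative P then true else false.
Lemma decP (P : Prop) : reflect P (dec P).
Proof. rewrite /dec; case: excluded_middle_informative => h; by constructor. Qed.

Lemma ev_const (c : nat -> nat) m : (forall n, m <= n -> c n.+1 <= c n) ->
  exists N, m <= N /\ forall n, N <= n -> c n.+1 = c n.
Proof.
move=> hc.
have mono : forall m', m <= m' -> forall n, m' <= n -> c n <= c m'.
  move=> m' hm; elim=> [|n IH] hn.
    by have -> : m' = 0 by lia.
  case: (ltnP m' n.+1) => h.
    have h1 := IH h. have h2 := hc n (leq_trans hm h). lia.
  by have -> : m' = n.+1 by lia.
suff H : forall v m', m <= m' -> c m' <= v -> exists N, m' <= N /\ forall n, N <= n -> c n.+1 = c n.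
  have [N [h1 h2]] := H (c m) m (leqnn _) (leqnn _). by exists N.
elim=> [|v IH] m' hm hv.
  exists m'; split=> // n hn. have := mono m' hm n.+1 (leq_trans hn (leqnSn _)).
  have := mono m' hm n hn. lia.
case: (classic (exists n, m' <= n /\ c n < c m')) => [[n [hn hlt]]|H].
  have [N [h1 h2]] := IH n (leq_trans hm hn) (ltac:(lia)).
  exists N; split=> //; exact: leq_trans hn h1.
exists m'; split=> // n hn.
have ge : forall n, m' <= n -> c m' <= c n.
  move=> n' hn'; case: (leqP (c m') (c n')) => // hlt; exfalso; apply: H; by exists n'.
have := mono m' hm n.+1 (leq_trans hn (leqnSn _)). have := mono m' hm n hn.
have := ge n hn. have := ge n.+1 (leq_trans hn (leqnSn _)). lia.
Qed.

Lemma GC (T : eqType) (S : nat -> seq T) (f : nat -> T -> T) m :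
  (forall n, uniq (S n)) ->
  (forall n, m <= n -> {in S n.+1 &, injective (f n)}) ->
  (forall n, m <= n -> forall t, t \in S n.+1 -> f n t \in S n) ->
  exists N, m <= N /\ forall n, N <= n -> forall t, t \in S n ->
    exists2 t', t' \in S n.+1 & f n t' = t.
Proof.
move=> hu hi hm.
have hle : forall n, m <= n -> size (S n.+1) <= size (S n).
  move=> n hn. rewrite -(size_map (f n)). apply: uniq_leq_size.
  - by rewrite map_inj_in_uniq ?hu //; exact: hi.
  - move=> x /mapP [t ht ->]; exact: hm.
have [N [hN hc]] := ev_const hle.
exists N; split=> // n hn t ht.
have hmn : m <= n by exact: leq_trans hN hn.
have U : uniq (map (f n) (S n.+1)) by rewrite map_inj_in_uniq ?hu //; exact: hi.
have sub : {subset map (f n) (S n.+1) <= S n}.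
  by move=> x /mapP [t' ht' ->]; exact: hm.
have sz : size (S n) <= size (map (f n) (S n.+1)) by rewrite size_map hc.
have [_ eqi] := uniq_min_size U sub sz.
have : t \in map (f n) (S n.+1) by rewrite eqi.
by case/mapP => t' ht' ->; exists t'.
Qed.

Fixpoint words (A : finType) (n : nat) : seq (seq A) :=
  if n is n'.+1 then [seq a :: s | a <- enum A, s <- words A n'] else [:: [::]].

Lemma mem_words (A : finType) n (s : seq A) : (s \in words A n) = (size s == n).
Proof.
elim: n s => [|n IH] s.
  by case: s.
case: s => [|a s].
  by apply/allpairsP; case=> [[x y] [_ _ //]].
apply/allpairsP/idP => [[[x y] [/= _ hy [E1 E2]]]|hs].
  by rewrite E2 /= eqSS -IH.
by exists (a, s); split=> //=; [rewrite mem_enum|rewrite IH].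
Qed.

Lemma uniq_words (A : finType) n : uniq (words A n).
Proof.
elim: n => [|n IH] //=. apply: allpairs_uniq => //; first exact: enum_uniq.
by move=> [a s] [a' s'] _ _ /= [-> ->].
Qed.

Definition factorial (A : Type) (L : seq A -> Prop) := forall u v, L (u ++ v) -> L u /\ L v.
Definition extendable (A : Type) (L : seq A -> Prop) :=
  forall w, L w -> (exists a, L (a :: w)) /\ (exists a, L (w ++ [:: a])).
Definition NC4 (A : Type) (L : seq A -> Prop) m := forall z (a a' b b' : A), m <= size z -> a <> a' -> b <> b' ->
  L (a :: z ++ [:: b]) -> L (a :: z ++ [:: b']) -> L (a' :: z ++ [:: b]) -> L (a' :: z ++ [:: b']) -> False.

Lemma decR (A : Type) (v v' : seq A) : size v = size v' -> v <> v' ->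
  exists t c c' x x', c <> c' /\ v = t ++ c :: x /\ v' = t ++ c' :: x'.
Proof.
elim: v v' => [|a s IH] [|a' s'] //= [hs] nv.
case: (classic (a = a')) => [E|na].
  subst a'. have ns : s <> s' by move=> E; apply: nv; rewrite E.
  have [t [c [c' [x [x' [nc [E1 E2]]]]]]] := IH s' hs ns.
  by exists (a :: t), c, c', x, x'; rewrite E1 E2.
by exists [::], a, a', s, s'.
Qed.

Lemma decL (A : Type) (u u' : seq A) : size u = size u' -> u <> u' ->
  exists x x' c c' t, c <> c' /\ u = x ++ c :: t /\ u' = x' ++ c' :: t.
Proof.
move=> hs nu.
have hs' : size (rev u) = size (rev u') by rewrite !size_rev.
have nu' : rev u <> rev u' by move=> E; apply: nu; rewrite -(revK u) E revK.
have [t [c [c' [x [x' [nc [E1 E2]]]]]]] := decR hs' nu'.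
exists (rev x), (rev x'), c, c', (rev t); split=> //; split.
  by rewrite -(revK u) E1 rev_cat rev_cons cat_rcons.
by rewrite -(revK u') E2 rev_cat rev_cons cat_rcons.
Qed.

Lemma split_last (T : Type) (z : seq T) n : size z = n.+1 -> exists p b, z = p ++ [:: b] /\ size p = n.
Proof.
case/lastP: z => [//|p b]; rewrite size_rcons => [[hs]].
by exists p, b; rewrite cats1.
Qed.

Lemma facL (A : Type) (L : seq A -> Prop) x y : factorial L -> L (x ++ y) -> L x.
Proof. by move=> hf /hf []. Qed.
Lemma facR (A : Type) (L : seq A -> Prop) x y : factorial L -> L (x ++ y) -> L y.
Proof. by move=> hf /hf []. Qed.

Lemma countL (A : finType) (L : seq A -> Prop) m k : factorial L -> NC4 L m ->
  exists N, m <= N /\ forall z u u', N <= size z -> size u = k -> size u' = k -> u <> u' ->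
    L (u ++ z) -> L (u' ++ z) -> exists b, L (u ++ z ++ [:: b]) /\ L (u' ++ z ++ [:: b]).
Proof.
move=> hf hc4.
pose good n (t : (seq A * seq A) * seq A) := size t.2 = n /\ [/\ t.1.1 <> t.1.2, size t.1.1 = k,
   size t.1.2 = k, L (t.1.1 ++ t.2) & L (t.1.2 ++ t.2)].
pose cand n := [seq (p, z) | p <- [seq (u, u') | u <- words A k, u' <- words A k], z <- words A n].
pose S n := [seq t <- cand n | dec (good n t)].
pose f n (t : (seq A * seq A) * seq A) := (t.1, take n t.2).
have memS : forall n t, (t \in S n) <-> good n t.
  move=> n [[u u'] z]; rewrite mem_filter; split.
    by case/andP => /decP.
  move=> g; apply/andP; split; first exact/decP.
  case: g => /= h1 [_ h3 h4 _ _].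
  apply/allpairsP; exists ((u,u'), z); split=> //=; last by rewrite mem_words h1.
  apply/allpairsP; exists (u, u'); split=> //=; by rewrite mem_words ?h3 ?h4.
have hu : forall n, uniq (S n).
  move=> n; apply: filter_uniq; apply: allpairs_uniq; last by move=> [? ?] [? ?] _ _ /= [-> ->].
    apply: allpairs_uniq; try exact: uniq_words. by move=> [? ?] [? ?] _ _ /= [-> ->].
  exact: uniq_words.
have hi : forall n, m <= n -> {in S n.+1 &, injective (f n)}.
  move=> n hn [[u1 u1'] z1] [[u2 u2'] z2] /memS g1 /memS g2 /= [E1 E2 E3].
  subst u2 u2'.
  case: g1 => /= s1 [nu su su' L1 L1']. case: g2 => /= s2 [_ _ _ L2 L2'].
  have [p1 [b1 [Ez1 sp1]]] := split_last s1.
  have [p2 [b2 [Ez2 sp2]]] := split_last s2.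
  move: E3; rewrite Ez1 Ez2 !take_size_cat // => Ep; subst p2.
  case: (classic (b1 = b2)) => [->//|nb]; exfalso.
  have [x [x' [c [c' [t [nc [Eu Eu']]]]]]] := decL (etrans su (esym su')) nu.
  have R : forall x c b u, u = x ++ c :: t -> L (u ++ p1 ++ [:: b]) -> L (c :: (t ++ p1) ++ [:: b]).
    move=> x0 c0 b u ->; rewrite -catA /= -catA => /(facR hf); by rewrite catA.
  apply: (hc4 (t ++ p1) c c' b1 b2) => //.
  - by rewrite size_cat sp1; apply: leq_trans hn (leq_addl _ _).
  - by apply: (R x _ _ u1) => //; rewrite -Ez1.
  - by apply: (R x _ _ u1) => //; rewrite -Ez2.
  - by apply: (R x' _ _ u1') => //; rewrite -Ez1.
  - by apply: (R x' _ _ u1') => //; rewrite -Ez2.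
have hm : forall n, m <= n -> forall t, t \in S n.+1 -> f n t \in S n.
  move=> n hn [[u u'] z] /memS [/= s1 [nu su su' L1 L1']]; apply/memS; split=> //=; last split=> //=.
  - by rewrite size_takel // s1.
  - by apply: (facL (y := drop n z)) => //; rewrite -catA cat_take_drop.
  - by apply: (facL (y := drop n z)) => //; rewrite -catA cat_take_drop.
have [N [hN hS]] := GC hu hi hm.
exists N; split=> // z u u' hz su su' nu L1 L2.
have [[[u1 u1'] z'] /memS [/= s' [_ _ _ L1' L2']] /= [E1 E2 E3]] :=
  hS (size z) hz ((u, u'), z) (proj2 (memS (size z) ((u, u'), z)) (conj erefl (And5 nu su su' L1 L2))).
subst u1 u1'.
have [p [b [Ez sp]]] := split_last s'.
move: E3; rewrite Ez take_size_cat // => Ep; subst p.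
by exists b; rewrite -Ez.
Qed.

Lemma ext_left_n (A : Type) (L : seq A -> Prop) w : extendable L -> L w ->
  forall n, exists x, size x = n /\ L (x ++ w).
Proof.
move=> he hw; elim=> [|n [x [sx hx]]]; first by exists [::].
have [[a ha] _] := he _ hx. by exists (a :: x); rewrite /= sx.
Qed.

Lemma ext_right_n (A : Type) (L : seq A -> Prop) w : extendable L -> L w ->
  forall n, exists x, size x = n /\ L (w ++ x).
Proof.
move=> he hw; elim=> [|n [x [sx hx]]]; first by exists [::]; rewrite cats0.
have [_ [a ha]] := he _ hx. exists (x ++ [:: a]); rewrite size_cat sx addn1; split=> //.
by rewrite catA.
Qed.

Lemma cat_inj_size (A : Type) (x x' u u' : seq A) : size x = size x' -> x ++ u = x' ++ u' -> u = u'.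
Proof. by move=> hs E; rewrite -(drop_size_cat u (erefl (size x))) E hs drop_size_cat. Qed.

Lemma PSL_from (A : Type) (L : seq A -> Prop) k N : factorial L -> extendable L ->
  (forall z u u', N <= size z -> size u = k -> size u' = k -> u <> u' ->
    L (u ++ z) -> L (u' ++ z) -> exists b, L (u ++ z ++ [:: b]) /\ L (u' ++ z ++ [:: b])) ->
  forall z u u', N <= size z -> size u = size u' -> size u <= k -> u <> u' ->
    L (u ++ z) -> L (u' ++ z) -> forall j, exists v, size v = j /\ L (u ++ z ++ v) /\ L (u' ++ z ++ v).
Proof.
move=> hf he hS.
have OL : forall z u u', N <= size z -> size u = size u' -> size u <= k -> u <> u' ->
    L (u ++ z) -> L (u' ++ z) -> exists b, L (u ++ z ++ [:: b]) /\ L (u' ++ z ++ [:: b]).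
  move=> z u u' hz hs hk nu L1 L2.
  have [x [sx Lx]] := ext_left_n he L1 (k - size u).
  have [x' [sx' Lx']] := ext_left_n he L2 (k - size u).
  have nxu : x ++ u <> x' ++ u' by move=> E; apply: nu; apply: cat_inj_size E; rewrite sx sx'.
  have [b [h1 h2]] := hS z (x ++ u) (x' ++ u') hz (ltac:(rewrite size_cat sx; lia))
     (ltac:(rewrite size_cat sx' -hs; lia)) nxu (ltac:(by rewrite -catA)) (ltac:(by rewrite -catA)).
  exists b; split; [apply: (facR (x := x))|apply: (facR (x := x'))] => //; by rewrite catA.
move=> z u u' hz hs hk nu L1 L2; elim=> [|j [v [sv [h1 h2]]]].
  by exists [::]; rewrite !cats0.
have hz' : N <= size (z ++ v) by rewrite size_cat; apply: leq_trans hz (leq_addr _ _).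
have [b [h3 h4]] := OL (z ++ v) u u' hz' hs hk nu h1 h2.
exists (v ++ [:: b]); split; first by rewrite size_cat sv addn1.
by split; [move: h3|move: h4]; rewrite -!catA.
Qed.

Definition Lrev (A : Type) (L : seq A -> Prop) := fun w => L (rev w).

Lemma Lrev_fact (A : Type) (L : seq A -> Prop) : factorial L -> factorial (Lrev L).
Proof. by move=> hf u v; rewrite /Lrev rev_cat => /hf []. Qed.

Lemma Lrev_ext (A : Type) (L : seq A -> Prop) : extendable L -> extendable (Lrev L).
Proof.
move=> he w; rewrite /Lrev => /he [[a ha] [b hb]]; split.
  by exists b; rewrite rev_cons -cats1.
by exists a; rewrite rev_cat /=.
Qed.

Lemma Lrev_NC4 (A : Type) (L : seq A -> Prop) m : NC4 L m -> NC4 (Lrev L) m.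
Proof.
move=> h z a a' b b' hz na nb; rewrite /Lrev.
have E : forall x y, rev (x :: z ++ [:: y]) = y :: rev z ++ [:: x].
  by move=> x y; rewrite rev_cons rev_cat /= cats1.
rewrite !E => h1 h2 h3 h4.
apply: (h (rev z) b b' a a') => //; by rewrite size_rev.
Qed.

Definition PSLp (A : Type) (L : seq A -> Prop) k N :=
  forall z u u', N <= size z -> size u = size u' -> size u <= k -> u <> u' ->
    L (u ++ z) -> L (u' ++ z) -> forall j, exists v, size v = j /\ L (u ++ z ++ v) /\ L (u' ++ z ++ v).
Definition PSRp (A : Type) (L : seq A -> Prop) k N :=
  forall z v v', N <= size z -> size v = size v' -> size v <= k -> v <> v' ->
    L (z ++ v) -> L (z ++ v') -> forall i, exists u, size u = i /\ L (u ++ z ++ v) /\ L (u ++ z ++ v').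

Lemma pair_survival (A : finType) (L : seq A -> Prop) m k : factorial L -> extendable L -> NC4 L m ->
  exists N, m <= N /\ PSLp L k N /\ PSRp L k N.
Proof.
move=> hf he h4.
have [NL [hNL hL]] := countL k hf h4.
have [NR [hNR hR]] := countL k (Lrev_fact hf) (Lrev_NC4 h4).
exists (maxn NL NR); split; first by rewrite leq_max hNL.
split.
  apply: (PSL_from hf he) => z u u' hz; apply: hL; apply: leq_trans hz; exact: leq_maxl.
move=> z v v' hz hs hk nv L1 L2 i.
have hPS := PSL_from (Lrev_fact hf) (Lrev_ext he)
  (fun z u u' hz => hR z u u' (leq_trans (leq_maxr NL NR) hz)).
have nv' : rev v <> rev v' by move=> E; apply: nv; rewrite -(revK v) E revK.
have [x [sx [h1 h2]]] := hPS (rev z) (rev v) (rev v') (ltac:(by rewrite size_rev))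
  (ltac:(by rewrite !size_rev)) (ltac:(by rewrite size_rev)) nv'
  (ltac:(by rewrite /Lrev -rev_cat revK)) (ltac:(by rewrite /Lrev -rev_cat revK)) i.
exists (rev x); rewrite size_rev; split=> //.
move: h1 h2; rewrite /Lrev !rev_cat !revK catA; split=> //.
by rewrite catA.
Qed.

Definition GL (A : Type) (L : seq A -> Prop) i w u := size u = i /\ L (u ++ w).
Definition GR (A : Type) (L : seq A -> Prop) j w v := size v = j /\ L (w ++ v).
Definition GE (A : Type) (L : seq A -> Prop) w u v := L (u ++ w ++ v).
Definition D (A : Type) (L : seq A -> Prop) i j w := DS (GL L i w) (GR L j w) (GE L w).

Lemma cat_inj_sizeL (A : Type) (x x' u u' : seq A) : size x = size x' -> x ++ u = x' ++ u' -> x = x'.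
Proof. by move=> hs E; rewrite -(take_size_cat u (erefl (size x))) E hs take_size_cat. Qed.

Lemma D_base (A : Type) (L : seq A -> Prop) k N w : factorial L -> extendable L -> 1 <= k ->
  PSLp L k N -> PSRp L k N ->
  C4 (GL L 1 w) (GR L 1 w) (GE L w) -> C6 (GL L 1 w) (GR L 1 w) (GE L w) ->
  N <= size w -> L w -> D L 1 1 w.
Proof.
move=> hf he hk hPL hPR h4 h6 hw Lw; apply: DS_local => //.
- move=> u [su Lu]. have [_ [a ha]] := he _ Lu.
  exists [:: a]; rewrite /GR /GE; split; last by rewrite catA.
  split=> //; apply: (facR (x := u)) => //; by rewrite catA.
- move=> v [sv Lv]. have [[a ha] _] := he _ Lv.
  exists [:: a]; rewrite /GL /GE; split=> //; split=> //.
  by apply: (facL (y := v)) => //; rewrite -catA.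
- have [[a ha] _] := he _ Lw. by exists [:: a].
- move=> u u' [su Lu] [su' Lu'] nu.
  have [v [sv [h1 h2]]] := hPL w u u' hw (etrans su (esym su')) (ltac:(by rewrite su)) nu Lu Lu' 1.
  exists v; split=> //; split=> //; apply: (facR (x := u)) => //; by rewrite catA.
- move=> v v' [sv Lv] [sv' Lv'] nv.
  have [u [su [h1 h2]]] := hPR w v v' hw (etrans sv (esym sv')) (ltac:(by rewrite sv)) nv Lv Lv' 1.
  exists u; split=> //; split=> //; apply: (facL (y := v)) => //; by rewrite -catA.
Qed.

Lemma D_right (A : Type) (L : seq A -> Prop) k N i j w : factorial L -> PSRp L k N ->
  N <= size w -> j.+1 <= k ->
  D L i j w -> (forall v, GR L j w v -> D L i 1 (w ++ v)) -> D L i j.+1 w.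
Proof.
move=> hf hPR hw hjk hD hD1.
apply: (@DS_transport _ _ _ (GL L i w)
   (fun vc : seq A * seq A => GR L j w vc.1 /\ GR L 1 (w ++ vc.1) vc.2)
   (GR L j.+1 w) (fun u vc => GE L w u vc.1 /\ GE L (w ++ vc.1) u vc.2) (GE L w)
   (fun vc => vc.1 ++ vc.2)).
- move=> [v c] [[sv Lv] [sc Lc]] /=; split; first by rewrite size_cat sv sc addn1.
  by rewrite catA.
- move=> v' [sv' Lv']; exists (take j v', drop j v'); split; last exact: cat_take_drop.
  have Ew : (w ++ take j v') ++ drop j v' = w ++ v' by rewrite -catA cat_take_drop.
  split; split => /=.
  + by rewrite size_takel // sv'.
  + by apply: (facL (y := drop j v')) => //; rewrite Ew.
  + by rewrite size_drop sv' subSnn.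
  + by rewrite Ew.
- move=> [v c] [v' c'] [[sv _] [sc _]] [[sv' _] [sc' _]] /= E.
  have Ev : v = v' := cat_inj_sizeL (etrans sv (esym sv')) E.
  have Ec : c = c' := cat_inj_size (etrans sv (esym sv')) E.
  by rewrite Ev Ec.
- move=> u [v c] _ _ /=; rewrite /GE; split=> [[_ h]|h]; first by rewrite -catA in h.
  split; last by rewrite -catA.
  by apply: (facL (y := c)) => //; rewrite -!catA.
apply: (@DS_comp _ _ _ (GL L i w) (GR L j w) (GE L w) (fun v c => GR L 1 (w ++ v) c)
   (fun v u c => GE L (w ++ v) u c)) => //.
- move=> v hv; apply: (DS_ext _ _ _ (hD1 v hv)).
  + move=> u; rewrite /GL /GE; split=> [[su Lu]|[[su _] Lu]].
      split; last exact: Lu.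
      by split=> //; apply: (facL (y := v)) => //; rewrite -catA.
    by split=> //; exact: Lu.
  + by [].
  + by [].
- move=> v1 c1 v2 c2 [sv1 Lv1] [sc1 Lc1] [sv2 Lv2] [sc2 Lc2] nv.
  have nvc : v1 ++ c1 <> v2 ++ c2.
    by move=> E; apply: nv; apply: cat_inj_sizeL E; rewrite sv1 sv2.
  have [u [su [h1 h2]]] := hPR w (v1 ++ c1) (v2 ++ c2) hw
    (ltac:(by rewrite !size_cat sv1 sv2 sc1 sc2)) (ltac:(by rewrite size_cat sv1 sc1 addn1))
    nvc (ltac:(by rewrite catA)) (ltac:(by rewrite catA)) i.
  exists u; rewrite /GL /GE; split.
    by split=> //; apply: (facL (y := v1 ++ c1)); rewrite // -catA.
  split; first by apply: (facL (y := c1)); rewrite // -!catA.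
  split; first by rewrite -catA.
  split; first by apply: (facL (y := c2)); rewrite // -!catA.
  by rewrite -catA.
Qed.

Lemma D_left (A : Type) (L : seq A -> Prop) k N i w : factorial L -> PSLp L k N ->
  N <= size w -> i.+1 <= k ->
  D L i 1 w -> (forall u, GL L i w u -> D L 1 1 (u ++ w)) -> D L i.+1 1 w.
Proof.
move=> hf hPL hw hik hD hD1.
apply: (@DS_flip _ _ (GR L 1 w) (GL L i.+1 w) (fun v u => GE L w u v)).
apply: (@DS_transport _ _ _ (GR L 1 w)
   (fun ua : seq A * seq A => GL L i w ua.1 /\ GL L 1 (ua.1 ++ w) ua.2)
   (GL L i.+1 w) (fun c ua => GE L w ua.1 c /\ GE L (ua.1 ++ w) ua.2 c) (fun c u => GE L w u c)
   (fun ua => ua.2 ++ ua.1)).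
- move=> [u a] [[su Lu] [sa La]] /=; split; first by rewrite size_cat su sa.
  by rewrite -catA.
- move=> u' [su' Lu']; exists (drop 1 u', take 1 u'); split; last exact: cat_take_drop.
  have Ew : take 1 u' ++ drop 1 u' ++ w = u' ++ w by rewrite catA cat_take_drop.
  split; split => /=.
  + by rewrite size_drop su' subn1.
  + by apply: (facR (x := take 1 u')) => //; rewrite Ew.
  + by rewrite size_takel // su'.
  + by rewrite Ew.
- move=> [u a] [u' a'] [[su _] [sa _]] [[su' _] [sa' _]] /= E.
  have Ea : a = a' := cat_inj_sizeL (etrans sa (esym sa')) E.
  have Eu : u = u' := cat_inj_size (etrans sa (esym sa')) E.
  by rewrite Ea Eu.
- move=> c [u a] _ _ /=; rewrite /GE; split=> [[_ h]|h]; first by move: h; rewrite -!catA.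
  split; last by move: h; rewrite -!catA.
  by apply: (facR (x := a)) => //; move: h; rewrite -!catA.
apply: (@DS_comp _ _ _ (GR L 1 w) (GL L i w) (fun v u => GE L w u v)
   (fun u a => GL L 1 (u ++ w) a) (fun u c a => GE L (u ++ w) a c)) => //.
- exact: DS_flip.
- move=> u hu; apply: (DS_ext _ _ _ (DS_flip (hD1 u hu))).
  + move=> c; rewrite /GR /GE; split=> [[sc Lc]|[[sc _] Lc]].
      split; last by move: Lc; rewrite -catA.
      by split=> //; apply: (facR (x := u)) => //; move: Lc; rewrite -catA.
    by split=> //; rewrite -catA.
  + by [].
  + by [].
- move=> u1 a1 u2 a2 [su1 Lu1] [sa1 La1] [su2 Lu2] [sa2 La2] nu.
  have nua : a1 ++ u1 <> a2 ++ u2.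
    by move=> E; apply: nu; apply: cat_inj_size E; rewrite sa1 sa2.
  have [c [sc [h1 h2]]] := hPL w (a1 ++ u1) (a2 ++ u2) hw
    (ltac:(by rewrite !size_cat su1 su2 sa1 sa2)) (ltac:(by rewrite size_cat su1 sa1))
    nua (ltac:(by rewrite -catA)) (ltac:(by rewrite -catA)) 1.
  exists c; rewrite /GR /GE; split.
    by split=> //; apply: (facR (x := a1 ++ u1)).
  split; first by apply: (facR (x := a1)) => //; move: h1; rewrite -!catA.
  split; first by move: h1; rewrite -!catA.
  split; first by apply: (facR (x := a2)) => //; move: h2; rewrite -!catA.
  by move: h2; rewrite -!catA.
Qed.

Lemma Dall (A : Type) (L : seq A -> Prop) k N : factorial L -> extendable L -> 1 <= k ->
  PSLp L k N -> PSRp L k N ->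
  (forall w, N <= size w -> L w ->
     C4 (GL L 1 w) (GR L 1 w) (GE L w) /\ C6 (GL L 1 w) (GR L 1 w) (GE L w)) ->
  forall w, N <= size w -> L w -> D L k k w.
Proof.
move=> hf he hk hPL hPR hC.
have base : forall w, N <= size w -> L w -> D L 1 1 w.
  move=> w hw Lw; have [h4 h6] := hC w hw Lw; exact: (D_base hf he hk hPL hPR).
have Di1 : forall i, 1 <= i -> i <= k -> forall w, N <= size w -> L w -> D L i 1 w.
  elim=> [//|i IH] hi hik w hw Lw.
  case: i IH hi hik => [|i] IH _ hik; first exact: base hw Lw.
  apply: (D_left hf hPL) => //; first exact: IH (ltn0Sn _) (ltnW hik) w hw Lw.
  move=> u [su Lu]; apply: base => //.
  by rewrite size_cat; apply: leq_trans hw (leq_addl _ _).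
have Dij : forall j, 1 <= j -> j <= k -> forall w, N <= size w -> L w -> D L k j w.
  elim=> [//|j IH] hj hjk w hw Lw.
  case: j IH hj hjk => [|j] IH _ hjk; first exact: Di1 hk (leqnn k) w hw Lw.
  apply: (D_right hf hPR) => //; first exact: IH (ltn0Sn _) (ltnW hjk) w hw Lw.
  move=> v [sv Lv]; apply: Di1 hk (leqnn k) _ _ Lv.
  by rewrite size_cat; apply: leq_trans hw (leq_addr _ _).
move=> w hw Lw; exact: Dij hk (leqnn k) w hw Lw.
Qed.

Import GRing.Theory.

Lemma size_fa (A : finType) (x : config A) i n : size (factor_at x i n) = n.
Proof. by rewrite /factor_at size_map size_iota. Qed.

Lemma fa_cat (A : finType) (x : config A) i n m :
  factor_at x i (n + m) = factor_at x i n ++ factor_at x (i + n%:Z)%R m.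
Proof.
rewrite /factor_at iotaD map_cat add0n; congr (_ ++ _).
rewrite -[in LHS](addn0 n) iotaDl -map_comp; apply: eq_map => j /=.
by rewrite PoszD addrA.
Qed.

Lemma inL_fact (A : finType) (X : config A -> Prop) : factorial (inL X).
Proof.
move=> u v [x [i [hX E]]].
rewrite size_cat fa_cat in E.
have su : size u = size (factor_at x i (size u)) by rewrite size_fa.
split; exists x.
  by exists i; split=> //; apply: cat_inj_sizeL E.
by exists (i + (size u)%:Z)%R; split=> //; apply: cat_inj_size E.
Qed.

Lemma inL_ext (A : finType) (X : config A -> Prop) : extendable (inL X).
Proof.
move=> w [x [i [hX E]]]; split.
  exists (x ((i - 1) + 0%:Z)%R); exists x, (i - 1)%R; split=> //.
  by rewrite /= -add1n fa_cat subrK -E.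
exists (x (i + (size w)%:Z + 0%:Z)%R); exists x, i; split=> //.
by rewrite size_cat /= fa_cat -E.
Qed.

Lemma all_V_nil (T : eqType) (V : T -> Prop) : all_V V [::].
Proof. by []. Qed.
Lemma all_V_cons (T : eqType) (V : T -> Prop) x s : V x -> all_V V s -> all_V V (x :: s).
Proof. by move=> hx hs y; rewrite inE => /orP [/eqP ->|/hs]. Qed.

Lemma inlE (T1 T2 : eqType) (a b : T1) : (inl a == inl b :> (T1 + T2)%type) = (a == b).
Proof. by []. Qed.
Lemma inrE (T1 T2 : eqType) (a b : T2) : (inr a == inr b :> (T1 + T2)%type) = (a == b).
Proof. by []. Qed.

Lemma tree_C (A : finType) (X : config A -> Prop) w :
  is_tree (ext_vertex X 1 w) (ext_edge X w) ->
  C4 (GL (inL X) 1 w) (GR (inL X) 1 w) (GE (inL X) w) /\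
  C6 (GL (inL X) 1 w) (GR (inL X) 1 w) (GE (inL X) w).
Proof.
move=> [_ hac]; split.
  move=> p p' q q' hp hp' hq hq' np nq e1 e2 e3 e4; apply: hac.
  exists (inl p), [:: inr q; inl p'; inr q']; split=> //.
  - by do ! apply: all_V_cons => //.
  - have np' : p != p' by apply/eqP.
    have nq' : q != q' by apply/eqP.
    by rewrite /= !inE /= !inlE !inrE (negbTE np') (negbTE nq').
move=> p1 p2 p3 q1 q2 q3 hp1 hp2 hp3 hq1 hq2 hq3 n1 n2 n3 m1 m2 m3 e1 e2 e3 e4 e5 e6; apply: hac.
exists (inl p1), [:: inr q1; inl p2; inr q2; inl p3; inr q3]; split=> //.
- by do ! apply: all_V_cons => //.
- have n1' : p1 != p2 by apply/eqP.
  have n2' : p2 != p3 by apply/eqP.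
  have n3' : p1 != p3 by apply/eqP.
  have m1' : q1 != q2 by apply/eqP.
  have m2' : q2 != q3 by apply/eqP.
  have m3' : q1 != q3 by apply/eqP.
  by rewrite /= !inE /= !inlE !inrE (negbTE n1') (negbTE n2') (negbTE n3') (negbTE m1') (negbTE m2') (negbTE m3').
Qed.

Lemma three_two (T : Type) (a b x y z : T) : x <> y -> y <> z -> x <> z ->
  (x = a \/ x = b) -> (y = a \/ y = b) -> (z = a \/ z = b) -> False.
Proof.
move=> nxy nyz nxz [?|?] [?|?] [?|?]; subst;
  first [exact: nxy erefl | exact: nyz erefl | exact: nxz erefl].
Qed.

Lemma DS_simple (A : finType) (X : config A -> Prop) k w :
  D (inL X) k k w -> simple_tree (ext_vertex X k w) (ext_edge X w).
Proof.
move=> [u0 [v0 [hu0 [hv0 h]]]].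
have Esym : forall a b, ext_edge X w a b -> ext_edge X w b a by move=> [a|a] [b|b].
have eU : forall v, ext_vertex X k w (inr v) -> ext_edge X w (inl u0) (inr v).
  by move=> v hv; apply/(h u0 v hu0 hv); left.
have eV : forall u, ext_vertex X k w (inl u) -> ext_edge X w (inl u) (inr v0).
  by move=> u hu; apply/(h u v0 hu hv0); right.
have e00 := eV u0 hu0.
have deg2 : forall x y z, ext_vertex X k w x -> ext_vertex X k w y -> ext_vertex X k w z ->
    y <> z -> ext_edge X w x y -> ext_edge X w x z -> x = inl u0 \/ x = inr v0.
  case=> [u|v] [u1|v1] [u2|v2] hx hy hz nyz e1 e2; rewrite /= in e1 e2; try done.
    left; congr inl; apply: NNPP => nu.
    case: (proj1 (h u v1 hx hy) e1) => [/nu []|E1].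
    case: (proj1 (h u v2 hx hz) e2) => [/nu []|E2].
    by apply: nyz; rewrite E1 E2.
  right; congr inr; apply: NNPP => nv.
  case: (proj1 (h u1 v hy hx) e1) => [E1|/nv []].
  case: (proj1 (h u2 v hz hx) e2) => [E2|/nv []].
  by apply: nyz; rewrite E1 E2.
have memV : forall (s : seq (seq A + seq A)) x, all_V (ext_vertex X k w) s -> x \in s ->
   ext_vertex X k w x by move=> s x hs hx; exact: hs.
split; first split.
- move=> [u|v] [u'|v'] ha hb.
  + exists [:: inr v0; inl u']; split; first by do ! apply: all_V_cons => //.
    split=> //; split; [exact: eV ha|split=> //; apply: Esym; exact: eV hb].
  + exists [:: inr v0; inl u0; inr v']; split; first by do ! apply: all_V_cons => //.
    split=> //; split; [exact: eV ha|split; [exact: Esym _ _ e00|split=> //; exact: eU hb]].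
  + exists [:: inl u0; inr v0; inl u']; split; first by do ! apply: all_V_cons => //.
    split=> //; split; [apply: Esym; exact: eU ha|split; [exact: e00|split=> //; apply: Esym; exact: eV hb]].
  + exists [:: inl u0; inr v']; split; first by do ! apply: all_V_cons => //.
    split=> //; split; [apply: Esym; exact: eU ha|split=> //; exact: eU hb].
- move=> [x [p [hV hu hsz hp hl]]].
  case: p hV hu hsz hp hl => [|y [|z r]] // hV hu _ [exy [eyz hr]] hl.
  have Vx : ext_vertex X k w x by apply: hV; rewrite inE eqxx.
  have Vy : ext_vertex X k w y by apply: hV; rewrite !inE eqxx orbT.
  have Vz : ext_vertex X k w z by apply: hV; rewrite !inE eqxx !orbT.
  move: hu; rewrite /= => /andP [hx /andP [hy _]].
  have nxy : x <> y by move=> E; subst; rewrite inE eqxx in hx.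
  have nxz : x <> z by move=> E; subst; rewrite !inE eqxx orbT in hx.
  have nyz : y <> z by move=> E; subst; rewrite inE eqxx in hy.
  have Vl : ext_vertex X k w (last z r) by apply: hV; rewrite inE; apply/orP; right; rewrite inE; apply/orP; right; exact: mem_last.
  have nyl : y <> last z r by move=> E; move: hy; rewrite E mem_last.
  have dx := deg2 x y (last z r) Vx Vy Vl nyl exy (Esym _ _ hl).
  have dy := deg2 y x z Vy Vx Vz nxz (Esym _ _ exy) eyz.
  have dz : z = inl u0 \/ z = inr v0.
    case: r hV hr hl hx hy Vl nyl {dx} => [|t r] hV hr hl hx hy Vl nyl.
      exact: deg2 z y x Vz Vy Vx (fun E => nxy (esym E)) (Esym _ _ eyz) hl.
    case: hr => ezt _.
    have Vt : ext_vertex X k w t by apply: hV; rewrite !inE eqxx !orbT.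
    have nyt : y <> t by move=> E; subst; rewrite !inE eqxx orbT in hy.
    exact: deg2 z y t Vz Vy Vt nyt (Esym _ _ eyz) ezt.
  exact: three_two nxy nyz nxz dx dy dz.
- move=> x p [hV hu hp]; rewrite leqNgt; apply/negP => hsz.
  case: p hV hu hp hsz => [|y [|z [|t [|s r]]]] // hV hu [exy [eyz [ezt [ets _]]]] _.
  have Vx : ext_vertex X k w x by apply: hV; rewrite inE eqxx.
  have Vy : ext_vertex X k w y by apply: hV; rewrite !inE eqxx orbT.
  have Vz : ext_vertex X k w z by apply: hV; rewrite !inE eqxx !orbT.
  have Vt : ext_vertex X k w t by apply: hV; rewrite !inE eqxx !orbT.
  have Vs : ext_vertex X k w s by apply: hV; rewrite !inE eqxx !orbT.
  move: hu; rewrite /= => /andP [hx /andP [hy /andP [hz _]]].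
  have nxz : x <> z by move=> E; subst; rewrite !inE eqxx orbT in hx.
  have nyz : y <> z by move=> E; subst; rewrite !inE eqxx in hy.
  have nyt : y <> t by move=> E; subst; rewrite !inE eqxx !orbT in hy.
  have nzt : z <> t by move=> E; subst; rewrite !inE eqxx in hz.
  have nzs : z <> s by move=> E; subst; rewrite !inE eqxx !orbT in hz.
  have dy := deg2 y x z Vy Vx Vz nxz (Esym _ _ exy) eyz.
  have dz := deg2 z y t Vz Vy Vt nyt (Esym _ _ eyz) ezt.
  have dt := deg2 t z s Vt Vz Vs nzs (Esym _ _ ezt) ets.
  exact: three_two nyz nzt nyt dy dz dt.
Qed.

Theorem mainTheorem8 (A : finType) (X : config A -> Prop) :
  shift_space X -> eventually_dendric X ->
  forall k : nat, 1 <= k ->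
    exists n : nat, 1 <= n /\
      forall w : seq A, inL X w -> n <= size w ->
        simple_tree (ext_vertex X k w) (ext_edge X w).
Proof.
move=> _ [m hm] k hk.
have hf := @inL_fact _ X. have he := @inL_ext _ X.
have hC : forall w, m <= size w -> inL X w ->
   C4 (GL (inL X) 1 w) (GR (inL X) 1 w) (GE (inL X) w) /\
   C6 (GL (inL X) 1 w) (GR (inL X) 1 w) (GE (inL X) w).
  by move=> w hw Lw; apply: tree_C; apply: hm.
have h4 : NC4 (inL X) m.
  move=> z a a' b b' hz na nb e1 e2 e3 e4.
  have Lz : inL X z by apply: (facL (y := [:: b])) => //; apply: (facR (x := [:: a])).
  have [c4 _] := hC z hz Lz.
  apply: (c4 [:: a] [:: a'] [:: b] [:: b']) => //.
  - by split=> //; apply: (facL (y := [:: b])) => //; rewrite -catA.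
  - by split=> //; apply: (facL (y := [:: b])) => //; rewrite -catA.
  - by split=> //; apply: (facR (x := [:: a])).
  - by split=> //; apply: (facR (x := [:: a])).
  - by case.
  - by case.
have [N [hmN [hPL hPR]]] := pair_survival k hf he h4.
exists (maxn N 1); split; first by rewrite leq_max leqnn orbT.
move=> w Lw hw.
apply: DS_simple.
apply: (Dall hf he hk hPL hPR) => //.
- move=> w' hw' Lw'; apply: hC => //; exact: leq_trans hmN hw'.
- by apply: leq_trans hw; rewrite leq_maxl.
Qed.
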